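(* Let $G=(V,E)$ be a connected finite multigraph without loops with $|V|\ge 2$, and let $f$ be an admissible function. Then there exists a cut $[S,\bar S]$ of $G$ such that $d^f_G(S,\bar S)=d^f(G)$ and such that both induced subgraphs $G[S]$ and $G[\bar S]$ are connected.
   Context: An admissible function is a function $f:[0,1]\to[0,\infty)$ that is concave and increasing on $[0,\tfrac12]$ and satisfies $f(x)=f(1-x)$ for all $x\in[0,1]$. For a graph $G=(V,E)$ and a nonempty proper subset $S\subset V$ with complement $\bar S=V\setminus S$, the cut $[S,\bar S]$ is the set of edges with one endpoint in $S$ and the other in $\bar S$; its balance is $b(S,\bar S)=\min(|S|,|\bar S|)/|V|$. Define $d^f_G(S,\bar S)=|[S,\bar S]|/f(b(S,\bar S))$ (interpreted as $+\infty$ if the denominator is $0$), and $d^f(G)=\min d^f_G(S,\bar S)$ over all cuts of $G$. $G[A]$ denotes the subgraph induced on $A\subseteq V$. *)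

(* Defs.v *)
From mathcomp Require Import all_boot.
From Stdlib Require Import Reals.

Set Implicit Arguments.
Unset Strict Implicit.
Unset Printing Implicit Defensive.

(* A finite multigraph is given by a finite vertex type V, a finite edge type E
   and two endpoint maps src dst : E -> V (parallel edges allowed). *)

Definition loopless (V E : finType) (src dst : E -> V) : Prop :=
  forall e : E, src e <> dst e.

Definition induced_adj (V E : finType) (src dst : E -> V) (A : {set V}) : rel V :=
  fun x y => [&& x \in A, y \in A &
     [exists e : E, ((src e == x) && (dst e == y)) || ((src e == y) && (dst e == x))]].

Definition induced_connected (V E : finType) (src dst : E -> V) (A : {set V}) : Prop :=
  forall x y, x \in A -> y \in A -> connect (induced_adj src dst A) x y.

Definition graph_connected (V E : finType) (src dst : E -> V) : Prop :=
  induced_connected src dst [set: V].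

Definition is_cut (V : finType) (S : {set V}) : Prop :=
  S != set0 /\ S != [set: V].

Definition cut_size (V E : finType) (src dst : E -> V) (S : {set V}) : nat :=
  #|[set e : E | (src e \in S) != (dst e \in S)]|.

Definition balance (V : finType) (S : {set V}) : R :=
  Rdiv (INR (minn #|S| #|~: S|)) (INR #|V|).

Definition admissible (f : R -> R) : Prop :=
  (forall x, Rle 0 x -> Rle x 1 -> Rle 0 (f x)) /\
  (forall x, Rle 0 x -> Rle x 1 -> f x = f (Rminus 1 x)) /\
  (forall x y, Rle 0 x -> Rle x y -> Rle y (Rdiv 1 2) -> Rle (f x) (f y)) /\
  (forall x y t, Rle 0 x -> Rle x (Rdiv 1 2) -> Rle 0 y -> Rle y (Rdiv 1 2) ->
     Rle 0 t -> Rle t 1 ->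
     Rle (Rplus (Rmult t (f x)) (Rmult (Rminus 1 t) (f y)))
         (f (Rplus (Rmult t x) (Rmult (Rminus 1 t) y)))).

(* d^f_G(S, ~S) as an extended real: None stands for +infinity
   (the case f(b(S,~S)) = 0). *)
Definition dfG (V E : finType) (src dst : E -> V) (f : R -> R) (S : {set V}) : option R :=
  if Req_EM_T (f (balance S)) 0 then None
  else Some (Rdiv (INR (cut_size src dst S)) (f (balance S))).

Definition ext_le (a b : option R) : Prop :=
  match a, b with
  | _, None => True
  | None, Some _ => False
  | Some x, Some y => Rle x y
  end.

Definition attains_df (V E : finType) (src dst : E -> V) (f : R -> R) (S : {set V}) : Prop :=
  is_cut S /\ forall T : {set V}, is_cut T -> ext_le (dfG src dst f S) (dfG src dst f T).

(* Main.v *)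
Require Import Defs.
From mathcomp Require Import all_boot.
From Stdlib Require Import Reals Lra Psatz Classical.

Lemma g1 (f : R -> R) : admissible f -> forall x y : R,
  (0 < x)%R -> (x <= y)%R -> (y <= 1/2)%R -> (x * f y <= y * f x)%R.
Proof.
move=> [Hnn [Hsym [Hmon Hcc]]] x y H0 H1 H2.
have Hy : (0 < y)%R by lra.
have := Hcc y 0%R (x / y)%R ltac:(lra) H2 ltac:(lra) ltac:(lra).
have Ht0 : (0 <= x / y)%R by (unfold Rdiv; apply Rmult_le_pos; [lra| apply Rlt_le, Rinv_0_lt_compat; lra]).
have Ht1 : (x / y <= 1)%R by (apply Rmult_le_reg_r with y; [lra|]; unfold Rdiv; rewrite Rmult_assoc Rinv_l; lra).
move=> /(_ Ht0 Ht1).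
replace (x / y * y + (1 - x / y) * 0)%R with x by (field; lra).
have Hf0 : (0 <= f 0)%R by apply Hnn; lra.
move=> H.
have : (x / y * f y <= f x)%R by nra.
move=> H'.
have -> : (x * f y = y * (x / y * f y))%R by field; lra.
apply Rmult_le_compat_l; lra.
Qed.

Lemma g2 (f : R -> R) : admissible f -> forall x y : R,
  (0 < x)%R -> (x <= y)%R -> (y <= 1)%R -> (x * f y <= y * f x)%R.
Proof.
move=> Ha x y H0 H1 H2.
have Ha' := Ha. move: Ha' => [Hnn [Hsym [Hmon Hcc]]].
destruct (Rle_or_lt y (1/2)) as [Hy|Hy]; first exact: (@g1 f Ha x y H0 H1 Hy).
rewrite (Hsym y) ; try lra.
have Hfx : (0 <= f x)%R by apply Hnn; lra.
destruct (Rle_or_lt x (1/2)) as [Hx|Hx].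
- destruct (Rle_or_lt x (1 - y)) as [Hz|Hz].
  + have := @g1 f Ha x (1 - y)%R H0 Hz ltac:(lra). nra.
  + have := Hmon (1 - y)%R x ltac:(lra) ltac:(lra) Hx. nra.
- rewrite (Hsym x); try lra.
  have := Hmon (1 - y)%R (1 - x)%R ltac:(lra) ltac:(lra) ltac:(lra).
  have : (0 <= f (1 - x))%R by apply Hnn; lra.
  nra.
Qed.

Lemma frac_bounds (a n : nat) : (0 < n)%N -> (a <= n)%N ->
  (0 <= INR a / INR n)%R /\ (INR a / INR n <= 1)%R.
Proof.
move=> Hn Han.
have Hn' : (0 < INR n)%R by apply lt_0_INR; apply/ltP.
have Ha : (INR a <= INR n)%R by apply le_INR; apply/leP.
have Ha0 : (0 <= INR a)%R by apply pos_INR.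
split.
- unfold Rdiv; apply Rmult_le_pos; [lra| apply Rlt_le, Rinv_0_lt_compat; lra].
- apply Rmult_le_reg_r with (INR n); [lra|]. unfold Rdiv; rewrite Rmult_assoc Rinv_l; lra.
Qed.

Lemma f_balance (V : finType) (f : R -> R) (X : {set V}) : admissible f ->
  (0 < #|V|)%N -> f (balance X) = f (INR #|X| / INR #|V|)%R.
Proof.
move=> [Hnn [Hsym _]] Hn.
rewrite /balance.
have HC := cardsC X.
have HX : (#|X| <= #|V|)%N by apply: max_card.
case: (leqP #|X| #|~: X|) => H.
- done.
-
  have -> : #|~: X| = (#|V| - #|X|)%N by rewrite -HC addKn.
  have [H0 H1] := @frac_bounds _ _ Hn HX.
  rewrite (Hsym _ H0 H1). f_equal.
  have Hn' : (0 < INR #|V|)%R by apply lt_0_INR; apply/ltP.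
  rewrite minus_INR; last by apply/leP.
  field; lra.
Qed.

Lemma key_ineq (V : finType) (f : R -> R) (a s : nat) : admissible f ->
  (0 < a)%N -> (a <= s)%N -> (s <= #|V|)%N ->
  (INR a * f (INR s / INR #|V|) <= INR s * f (INR a / INR #|V|))%R.
Proof.
move=> Ha Ha0 Has Hs.
have Hn : (0 < #|V|)%N by apply: leq_trans Hs; apply: leq_trans Has.
have Hn' : (0 < INR #|V|)%R by apply lt_0_INR; apply/ltP.
have Hx : (0 < INR a / INR #|V|)%R.
  unfold Rdiv; apply Rmult_lt_0_compat; [apply lt_0_INR; apply/ltP; done| apply Rinv_0_lt_compat; lra].
have Hxy : (INR a / INR #|V| <= INR s / INR #|V|)%R.
  unfold Rdiv; apply Rmult_le_compat_r; [apply Rlt_le, Rinv_0_lt_compat; lra| apply le_INR; apply/leP; done].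
have [_ H1] := @frac_bounds _ _ Hn Hs.
have := @g2 f Ha _ _ Hx Hxy H1.
have -> : forall u, (INR a / INR #|V| * u = / INR #|V| * (INR a * u))%R by move=> u; field; lra.
have -> : forall u, (INR s / INR #|V| * u = / INR #|V| * (INR s * u))%R by move=> u; field; lra.
move=> H. apply Rmult_le_reg_l with (/ INR #|V|)%R; [apply Rinv_0_lt_compat; lra| exact H].
Qed.

Lemma ext_le_refl (a : option R) : ext_le a a.
Proof. by case: a => [x|] //=; apply Rle_refl. Qed.

Lemma ext_le_trans (a b c : option R) : ext_le a b -> ext_le b c -> ext_le a c.
Proof.
case: a => [x|]; case: b => [y|]; case: c => [z|] //=. apply Rle_trans.
Qed.

Lemma ext_le_total (a b : option R) : ext_le a b \/ ext_le b a.
Proof.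
case: a => [x|]; case: b => [y|] /=; auto.
destruct (Rle_or_lt x y); [left|right]; lra.
Qed.

Lemma exists_min (T : eqType) (g : T -> option R) (l : seq T) : l != [::] ->
  exists2 m, m \in l & forall t, t \in l -> ext_le (g m) (g t).
Proof.
elim: l => [//|a l IH] _.
case: l IH => [|b l] IH.
- exists a; first by rewrite inE.
  move=> t; rewrite inE => /eqP ->; exact: ext_le_refl.
- have [m Hm Hmin] := IH isT.
  case: (ext_le_total (g a) (g m)) => H.
  + exists a; first by rewrite inE eqxx.
    move=> t; rewrite inE => /orP [/eqP ->|Ht]; first exact: ext_le_refl.
    exact: ext_le_trans H (Hmin t Ht).
  + exists m; first by rewrite inE Hm orbT.
    move=> t; rewrite inE => /orP [/eqP ->|Ht]; first exact: H.
    exact: Hmin.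
Qed.

Lemma closed_conn (V : finType) (e : rel V) (A : {set V}) x y :
  (forall u v, e u v -> u \in A -> v \in A) -> connect e x y -> x \in A -> y \in A.
Proof.
move=> H /connectP [p pth ->]; elim: p x pth => //= z p IH x /andP[exz pth] xA.
apply: IH => //; exact: H exz xA.
Qed.

Lemma not_setT (V : finType) (A : {set V}) : A != setT -> exists y, y \notin A.
Proof.
move=> HA.
case: (pickP (fun y => y \notin A)) => [y Hy | H]; first by exists y.
case/negP: HA; apply/eqP/setP => y; rewrite inE; have := H y; by move/negbFE.
Qed.

Lemma cut_pos (V E : finType) (src dst : E -> V) (A : {set V}) :
  graph_connected src dst -> is_cut A -> (0 < cut_size src dst A)%N.
Proof.
move=> Hc [H0 H1].
rewrite lt0n; apply/negP => /eqP Hz.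
have He : forall e, (src e \in A) = (dst e \in A).
  move=> e; apply/eqP; apply/negPn/negP => Hne.
  have : e \in [set e : E | (src e \in A) != (dst e \in A)] by rewrite inE.
  by rewrite (cards0_eq Hz) inE.
case/set0Pn: H0 => x xA.
case: (@not_setT _ _ H1) => y yA.
have := Hc x y (in_setT x) (in_setT y) => Hxy.
case/negP: yA; apply: (@closed_conn _ _ _ _ _ _ Hxy xA) => u v.
rewrite /induced_adj => /and3P [_ _ /existsP [e /orP [/andP [/eqP <- /eqP <-]|/andP [/eqP <- /eqP <-]]]].
- by rewrite He.
- by rewrite He.
Qed.

Lemma cut_size_C (V E : finType) (src dst : E -> V) (S : {set V}) :
  cut_size src dst (~: S) = cut_size src dst S.
Proof.
rewrite /cut_size; apply: eq_card => e; rewrite !inE.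
by case: (src e \in S); case: (dst e \in S).
Qed.

Lemma balance_C (V : finType) (S : {set V}) : balance (~: S) = balance S.
Proof. by rewrite /balance setCK minnC. Qed.

Lemma dfG_C (V E : finType) (src dst : E -> V) f (S : {set V}) :
  dfG src dst f (~: S) = dfG src dst f S.
Proof. by rewrite /dfG balance_C cut_size_C. Qed.

Lemma attains_C (V E : finType) (src dst : E -> V) f (S : {set V}) :
  attains_df src dst f S -> attains_df src dst f (~: S).
Proof.
move=> [[H0 H1] Hm]; split; last by move=> T HT; rewrite dfG_C; exact: Hm.
split.
- apply/negP => /eqP HC; case/negP: H1; apply/eqP.
  by rewrite -(setCK S) HC setC0.
- apply/negP => /eqP HC; case/negP: H0; apply/eqP.
  by rewrite -(setCK S) HC setCT.
Qed.

Lemma piece (V E : finType) (src dst : E -> V) f (S P : {set V}) :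
  admissible f -> attains_df src dst f S -> is_cut P -> (0 < #|P|)%N ->
  (#|P| <= #|S|)%N ->
  (cut_size src dst P * #|S| <= cut_size src dst S * #|P|)%N ->
  attains_df src dst f P.
Proof.
move=> Ha [HSc Hm] HP Hp0 HpS Hc.
split => // T HT.
apply: ext_le_trans (Hm T HT).
have HSV : (#|S| <= #|V|)%N by apply: max_card.
have Hn : (0 < #|V|)%N by apply: leq_trans HSV; apply: leq_trans HpS.
have Hs0 : (0 < #|S|)%N by apply: leq_trans HpS.
have Hk := @key_ineq V f _ _ Ha Hp0 HpS HSV.
have Hnn := proj1 Ha.
have [HS1 HS2] := @frac_bounds _ _ Hn HSV.
have HFs := Hnn _ HS1 HS2.
have HsR : (0 < INR #|S|)%R by apply lt_0_INR; apply/ltP.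
have HpR : (0 < INR #|P|)%R by apply lt_0_INR; apply/ltP.
have HcR : (INR (cut_size src dst P) * INR #|S| <= INR (cut_size src dst S) * INR #|P|)%R.
  by rewrite -!mult_INR; apply le_INR; apply/leP.
have Hc0 : (0 <= INR (cut_size src dst S))%R by apply pos_INR.
have Hcp0 : (0 <= INR (cut_size src dst P))%R by apply pos_INR.
rewrite /dfG !(@f_balance V f _ Ha Hn).
set Fs := f (INR #|S| / INR #|V|)%R in Hk HFs *.
set Fp := f (INR #|P| / INR #|V|)%R in Hk *.
case: Req_EM_T => HP0; case: Req_EM_T => HS0 //=.
- exfalso. have : (0 < Fs)%R by lra. move=> HFs'. nra.
- have HFs' : (0 < Fs)%R by lra.
  have HFp : (0 < Fp)%R by nra.
  have Hx : (INR (cut_size src dst P) * Fs <= INR (cut_size src dst S) * Fp)%R.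
    apply Rmult_le_reg_l with (INR #|S|); first lra.
    nra.
  apply Rmult_le_reg_r with (Fp * Fs)%R; first nra.
  replace (INR (cut_size src dst P) / Fp * (Fp * Fs))%R with (INR (cut_size src dst P) * Fs)%R by (field; lra).
  replace (INR (cut_size src dst S) / Fs * (Fp * Fs))%R with (INR (cut_size src dst S) * Fp)%R by (field; lra).
  exact Hx.
Qed.

Lemma cut_split (V E : finType) (src dst : E -> V) (A S : {set V}) :
  A \subset S ->
  (forall d, src d \in A -> dst d \in S -> dst d \in A) ->
  (forall d, dst d \in A -> src d \in S -> src d \in A) ->
  cut_size src dst S = (cut_size src dst A + cut_size src dst (S :\: A))%N.
Proof.
move=> /subsetP HAS H1 H2.
rewrite /cut_size.
have -> : [set d | (src d \in S) != (dst d \in S)] =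
  [set d | (src d \in A) != (dst d \in A)] :|: [set d | (src d \in S :\: A) != (dst d \in S :\: A)].
  apply/setP => d; rewrite !inE.
  have h1 := H1 d; have h2 := H2 d; have h3 := HAS (src d); have h4 := HAS (dst d).
  move: h1 h2 h3 h4.
  by case: (src d \in A); case: (dst d \in A); case: (src d \in S); case: (dst d \in S) => //= h1 h2 h3 h4; (try by have := h1 isT isT); (try by have := h2 isT isT); (try by have := h3 isT); (try by have := h4 isT).
rewrite cardsU.
have -> : [set d | (src d \in A) != (dst d \in A)] :&: [set d | (src d \in S :\: A) != (dst d \in S :\: A)] = set0.
  apply/setP => d; rewrite !inE.
  have h1 := H1 d; have h2 := H2 d; have h3 := HAS (src d); have h4 := HAS (dst d).
  move: h1 h2 h3 h4.
  by case: (src d \in A); case: (dst d \in A); case: (src d \in S); case: (dst d \in S) => //= h1 h2 h3 h4; (try by have := h1 isT isT); (try by have := h2 isT isT); (try by have := h3 isT); (try by have := h4 isT).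
by rewrite cards0 subn0.
Qed.

Arguments cut_split {V E src dst A S}.
Arguments not_setT {V A}.
Arguments cut_pos {V E src dst A}.
Arguments piece {V E src dst f S P}.

Lemma step (V E : finType) (src dst : E -> V) f (S : {set V}) :
  admissible f -> graph_connected src dst -> attains_df src dst f S ->
  ~ induced_connected src dst S ->
  exists S', attains_df src dst f S' /\ (cut_size src dst S' < cut_size src dst S)%N.
Proof.
move=> Ha Hg HS Hnc.
have [x [y [xS [yS nxy]]]] : exists x y, x \in S /\ y \in S /\ ~~ connect (induced_adj src dst S) x y.
  apply NNPP => Hno; apply: Hnc => x y xS yS; apply/negPn/negP => H; apply: Hno; exists x, y; auto.
pose A := [set z in S | connect (induced_adj src dst S) x z].
have AS : forall z, z \in A -> z \in S by move=> z; rewrite inE => /andP[].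
have H1 : forall d, src d \in A -> dst d \in S -> dst d \in A.
  move=> d; rewrite !inE => /andP[sS cx] dS; rewrite dS /=.
  apply: connect_trans cx _; apply connect1; rewrite /induced_adj sS dS /=.
  by apply/existsP; exists d; rewrite !eqxx.
have H2 : forall d, dst d \in A -> src d \in S -> src d \in A.
  move=> d; rewrite !inE => /andP[sS cx] dS; rewrite dS /=.
  apply: connect_trans cx _; apply connect1; rewrite /induced_adj sS dS /=.
  by apply/existsP; exists d; rewrite !eqxx orbT.
have xA : x \in A by rewrite inE xS connect0.
have yA : y \notin A by rewrite inE yS /=.
have HAS : A \subset S by apply/subsetP.
have Hcs := cut_split HAS H1 H2.
move: Hcs; move: A AS H1 H2 xA yA HAS => A AS _ _ xA yA HAS Hcs.
case: (HS) => [[HS0 HS1] _].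
have [z zS] := not_setT HS1.
have cA : is_cut A.
  split; first by apply/set0Pn; exists x.
  apply/negP => /eqP HA; case/negP: zS; apply: AS; by rewrite HA inE.
have cB : is_cut (S :\: A).
  split; first by apply/set0Pn; exists y; rewrite inE yA yS.
  apply/negP => /eqP HA; case/negP: zS; have : z \in S :\: A by rewrite HA inE.
  by rewrite inE => /andP[].
have pA := cut_pos Hg cA.
have pB := cut_pos Hg cB.
have Hcard : #|S| = (#|A| + #|S :\: A|)%N.
  by rewrite -(cardsID A S) (setIidPr HAS).
have a0 : (0 < #|A|)%N by apply/card_gt0P; exists x.
have b0 : (0 < #|S :\: A|)%N by apply/card_gt0P; exists y; rewrite inE yA yS.
set a := #|A| in Hcard a0 *. set b := #|S :\: A| in Hcard b0 *.
set cS := cut_size src dst S in Hcs *.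
set cA' := cut_size src dst A in Hcs pA *.
set cB' := cut_size src dst (S :\: A) in Hcs pB *.
case: (leqP (cA' * #|S|) (cS * a)) => Hle.
- exists A; split.
  + apply: piece Ha HS cA a0 _ Hle; by rewrite Hcard leq_addr.
  + by rewrite Hcs -[X in (X < _)%N](addn0 cA') ltn_add2l.
- exists (S :\: A); split.
  + apply: piece Ha HS cB b0 _ _; first by rewrite Hcard leq_addl.
    rewrite leqNgt; apply/negP => Hlt.
    have := leq_add Hle Hlt.
    rewrite addSn addnS -/cS -/b -/cB' -mulnDr -mulnDl -Hcs -Hcard => H.
    by rewrite ltnNge leqnSn in H.
  + by rewrite Hcs -[X in (X < _)%N](add0n cB') ltn_add2r.
Qed.

Arguments step {V E src dst f S}.
Arguments attains_C {V E src dst f S}.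

Lemma main_ind (V E : finType) (src dst : E -> V) f :
  admissible f -> graph_connected src dst -> forall k (S : {set V}),
  (cut_size src dst S < k)%N -> attains_df src dst f S ->
  exists S : {set V},
    attains_df src dst f S /\
    induced_connected src dst S /\
    induced_connected src dst (~: S).
Proof.
move=> Ha Hg; elim => [//|k IH] S Hk HS.
case: (classic (induced_connected src dst S)) => HcS.
- case: (classic (induced_connected src dst (~: S))) => HcC.
  + by exists S.
  + have [S' [HS' Hlt]] := step Ha Hg (attains_C HS) HcC.
    apply: (IH S') HS'. rewrite cut_size_C in Hlt. exact: leq_trans Hlt Hk.
- have [S' [HS' Hlt]] := step Ha Hg HS HcS.
  apply: (IH S') HS'. exact: leq_trans Hlt Hk.
Qed.

Theorem proposition2 (V E : finType) (src dst : E -> V) (f : R -> R) :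
  loopless src dst ->
  graph_connected src dst ->
  2 <= #|V| ->
  admissible f ->
  exists S : {set V},
    attains_df src dst f S /\
    induced_connected src dst S /\
    induced_connected src dst (~: S).
Proof.
move=> _ Hg H2 Ha.
pose l := [seq S <- enum {set V} | (S != set0) && (S != setT)].
have [x _] : exists x : V, x \in V by apply/card_gt0P; apply: leq_trans H2.
have Hl : l != [::].
  apply/eqP => Hl.
  have : [set x] \in l.
    rewrite mem_filter mem_enum andbT; apply/andP; split.
    - by apply/set0Pn; exists x; rewrite inE.
    - apply/negP => /eqP H; move: H2; by rewrite -cardsT -H cards1.
  by rewrite Hl.
have [M HM Hmin] := @exists_min _ (dfG src dst f) l Hl.
have HcM : is_cut M by move: HM; rewrite mem_filter => /andP[/andP[H0 H1] _].
apply: (@main_ind _ _ _ _ _ Ha Hg (cut_size src dst M).+1 M (ltnSn _)).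
split => // T [T0 T1]; apply: Hmin.
by rewrite mem_filter mem_enum T0 T1.
Qed.
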